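(* Suppose $\mathcal U$ is quasiconvex and strongly stable with parameters $a,b,q$, and let $L=b\bigl(1+\max_{i,j\in\mathbb K}\|F^{(i)}-F^{(j)}\|^{q-1}\bigr)$. Then for every admissible policy $\pi$ and every $T\ge1$, $$\tilde{\mathcal R}(\pi,T)\le\frac{L}{T}\sum_{i\ne i^*}\mathbb E[\tau_i(T)]\,\|F^{(i^* )}-F^{(i)}\|.$$
   Context: Bandit setting: $K\ge1$, $\mathbb K=\{1,\dots,K\}$; arm $i$ produces i.i.d. rewards $X^{(i)}_1,X^{(i)}_2,\dots$ with distribution function $F^{(i)}$, all rewards mutually independent. An admissible policy $\pi=(\pi_1,\pi_2,\dots)$ chooses $\pi_t\in\mathbb K$ as a measurable function of an independent randomization variable $V$ and past actions/rewards; $\tau_i(t)=\sum_{s\le t}\mathbf 1\{\pi_s=i\}$, and the reward at time $t$ is $X^\pi_t=X^{(i)}_{\tau_i(t)}$ on $\{\pi_t=i\}$. Empirical distribution functions: $\hat F_t(x_1,\dots,x_t;y)=\frac1t\sum_{s\le t}\mathbf 1\{x_s\le y\}$, $\hat F^{(i)}_t=\hat F_t(X^{(i)}_1,\dots,X^{(i)}_t;\cdot)$; $\hat{\mathcal D}$ is the set of all empirical distribution functions of finite real sequences. $\Delta_{K-1}$ is the probability simplex in $\mathbb R^K$, $F_p=\sum_ip_iF^{(i)}$, $\mathcal D^\Delta=\{F_p:p\in\Delta_{K-1}\}$. $(L,\|\cdot\|)$ is a Banach space of bounded functions on $\mathbb R$ containing $\mathcal D^\Delta\cup\hat{\mathcal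 D}$, and $\mathcal U:L\to\mathbb R$. $\mathcal U$ is quasiconvex if $\mathcal U(\lambda F+(1-\lambda)G)\le\max\{\mathcal U(F),\mathcal U(G)\}$. $\mathcal U$ is strongly stable if (1) there exist $b>0,q\ge1$ with $|\mathcal U(F)-\mathcal U(G)|\le b(\|F-G\|+\|F-G\|^q)$ for all $F\in\mathcal D^\Delta$, $G\in\mathcal D^\Delta\cup\hat{\mathcal D}$, and (2) there is $a>0$ with $\mathbb P(\|\hat F^{(i)}_t-F^{(i)}\|\ge x)\le2\exp(-atx^2)$ for all $i\in\mathbb K$, $x>0$, $t\ge1$. Let $p^*\in\arg\max_{p\in\Delta_{K-1}}\mathcal U(F_p)$, $\Delta_i=\mathcal U(F_{p^*})-\mathcal U(F^{(i)})$ and $i^*\in\arg\min_{i}\Delta_i$. The proxy distribution is $\tilde F^\pi_T=\frac1T\sum_{i=1}^K\tau_i(T)F^{(i)}$ and the proxy regret is $\tilde{\mathcal R}(\pi,T)=\mathbb E[\mathcal U(F_{p^*})-\mathcal U(\tilde F^\pi_T)]$. *)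

(* Defs.v *)
From HB Require Import structures.
From mathcomp Require Import all_boot all_order all_algebra.
From mathcomp Require Import all_classical all_reals all_analysis.
Set Implicit Arguments. Unset Strict Implicit. Unset Printing Implicit Defensive.
Import Order.TTheory GRing.Theory Num.Theory.
Local Open Scope classical_set_scope.
Local Open Scope ring_scope.

Definition fsub (R : realType) (f g : R -> R) : R -> R := fun y => f y - g y.

Definition bounded_fun (R : realType) (f : R -> R) : Prop :=
  exists M : R, forall y, `|f y| <= M.

Definition banach_fun_space (R : realType) (L : set (R -> R))
    (N : (R -> R) -> R) : Prop :=
  [/\ L (fun _ => 0),
      (forall f g, L f -> L g -> L (fun y => f y + g y)),
      (forall (c : R) f, L f -> L (fun y => c * f y)),
      (forall f, L f -> bounded_fun f) &
   [/\ (forall f, L f -> 0 <= N f),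
       (forall f, L f -> N f = 0 -> f = (fun _ => 0)),
       (forall (c : R) f, L f -> N (fun y => c * f y) = `|c| * N f),
       (forall f g, L f -> L g -> N (fun y => f y + g y) <= N f + N g) &
       (forall u : nat -> (R -> R), (forall n, L (u n)) ->
          (forall e : R, 0 < e -> exists n0 : nat, forall m n : nat,
              (n0 <= m)%N -> (n0 <= n)%N -> N (fsub (u m) (u n)) < e) ->
          exists f, L f /\ forall e : R, 0 < e -> exists n0 : nat,
              forall n : nat, (n0 <= n)%N -> N (fsub (u n) f) < e)]].

Definition in_simplex (R : realType) (K : nat) (p : 'I_K -> R) : Prop :=
  (forall i, 0 <= p i) /\ \sum_(i < K) p i = 1.

Definition Fmix (R : realType) (K : nat) (F : 'I_K -> R -> R) (p : 'I_K -> R)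
  : R -> R := fun y => \sum_(i < K) p i * F i y.

Definition DDelta (R : realType) (K : nat) (F : 'I_K -> R -> R) (G : R -> R)
  : Prop := exists p, in_simplex p /\ G = Fmix F p.

Definition emp (R : realType) (xs : seq R) : R -> R :=
  fun y => (size xs)%:R^-1 * \sum_(x <- xs) (if x <= y then 1 else 0).

Definition Dhat (R : realType) (G : R -> R) : Prop :=
  exists xs : seq R, xs != [::] /\ G = emp xs.

Definition quasiconvex (R : realType) (L : set (R -> R)) (U : (R -> R) -> R)
  : Prop :=
  forall F G (lam : R), L F -> L G -> 0 <= lam <= 1 ->
    U (fun y => lam * F y + (1 - lam) * G y) <= Num.max (U F) (U G).

(* strong stability with parameters a, b, q.
   Rewards: X i s is the (s+1)-th reward X^(i)_(s+1) of arm i. *)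
Definition strongly_stable (R : realType) (d : measure_display)
    (Omega : measurableType d) (P : probability Omega R) (K : nat)
    (X : 'I_K -> nat -> Omega -> R) (F : 'I_K -> R -> R)
    (N : (R -> R) -> R) (U : (R -> R) -> R) (a b q : R) : Prop :=
  [/\ 0 < b, 1 <= q, 0 < a,
    (forall F' G, DDelta F F' -> DDelta F G \/ Dhat G ->
        `|U F' - U G| <= b * (N (fsub F' G) + N (fsub F' G) `^ q)) &
    (forall (i : 'I_K) (x : R) (t : nat), 0 < x -> (1 <= t)%N ->
        (P [set w | (x <= N (fsub (emp [seq X i s w | s <- iota 0 t]) (F i)))%R]
          <= (2 * expR (- (a * t%:R * x ^+ 2)))%R%:E)%E)].

Definition mutually_independent (R : realType) (d : measure_display)
    (Omega : measurableType d) (P : probability Omega R) (I : eqType)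
    (Y : I -> Omega -> R) : Prop :=
  forall (J : seq I) (B : I -> set R), uniq J ->
    (forall j, measurable (B j)) ->
    P (\big[setI/setT]_(j <- J) (Y j @^-1` B j))
      = (\prod_(j <- J) P (Y j @^-1` B j))%E.

Definition VX_family (R : realType) (Omega : Type) (K : nat)
    (V : Omega -> R) (X : 'I_K -> nat -> Omega -> R)
    (j : option ('I_K * nat)) : Omega -> R :=
  match j with None => V | Some (i, s) => X i s end.

(* times are 0-based: pi t is the action at time t+1.
   tau pi i t = number of pulls of arm i during the first t rounds *)
Definition tau (Omega : Type) (K : nat) (pi : nat -> Omega -> 'I_K)
    (i : 'I_K) (t : nat) (w : Omega) : nat :=
  \sum_(s < t) (pi s w == i).

Definition Xpi (R : realType) (Omega : Type) (K : nat)
    (X : 'I_K -> nat -> Omega -> R) (pi : nat -> Omega -> 'I_K) (t : nat)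
    (w : Omega) : R :=
  X (pi t w) (tau pi (pi t w) t w) w.

Definition past_gen (R : realType) (d : measure_display)
    (Omega : measurableType d) (K : nat) (V : Omega -> R)
    (X : 'I_K -> nat -> Omega -> R) (pi : nat -> Omega -> 'I_K) (t : nat)
  : set (set Omega) :=
  [set A | (exists B : set R, measurable B /\ A = V @^-1` B)
        \/ (exists s, (s < t)%N /\ exists B : set 'I_K, A = pi s @^-1` B)
        \/ (exists s, (s < t)%N /\ exists B : set R,
                measurable B /\ A = Xpi X pi s @^-1` B)].

(* admissible policy: each action is a measurable function of V and of the
   past actions and rewards, i.e. it is measurable w.r.t. the generated
   sigma-algebra *)
Definition admissible (R : realType) (d : measure_display)
    (Omega : measurableType d) (K : nat) (V : Omega -> R)
    (X : 'I_K -> nat -> Omega -> R) (pi : nat -> Omega -> 'I_K) : Prop :=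
  forall (t : nat) (i : 'I_K), <<s past_gen V X pi t >> (pi t @^-1` [set i]).

Definition Ftilde (R : realType) (Omega : Type) (K : nat)
    (F : 'I_K -> R -> R) (pi : nat -> Omega -> 'I_K) (T : nat) (w : Omega)
  : R -> R := Fmix F (fun i => (tau pi i T w)%:R / T%:R).

(* Main.v *)
Require Import Defs.
From HB Require Import structures.
From mathcomp Require Import all_boot all_order all_algebra.
From mathcomp Require Import all_classical all_reals all_analysis.
From mathcomp Require Import measurable_realfun.
From mathcomp Require Import ring lra.
Import Order.TTheory GRing.Theory Num.Theory.
Local Open Scope classical_set_scope.
Local Open Scope ring_scope.

Lemma tauM_gen (R : realType) (d : measure_display) (Omega : measurableType d)
  (K : nat) (pi : nat -> Omega -> 'I_K) (j : 'I_K) (s : nat) :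
  (forall r, (r < s)%N -> forall i, measurable (pi r @^-1` [set i])) ->
  measurable_fun setT (fun w => (tau pi j s w)%:R : R).
Proof.
move=> H.
have -> : (fun w => (tau pi j s w)%:R : R) =
   (fun w => \sum_(r <- index_enum 'I_s) (\1_(pi r @^-1` [set j]) w : R)).
  apply/funext => w; rewrite /tau natr_sum; apply: eq_bigr => r _.
  rewrite /indic; have -> : (w \in pi r @^-1` [set j]) = (pi r w == j) => //.
  by apply/idP/eqP; rewrite inE.
apply: measurable_sum => r; apply: measurable_indic; exact: H.
Qed.

Lemma piM (R : realType) (d : measure_display) (Omega : measurableType d)
  (K : nat) (X : 'I_K -> nat -> Omega -> R) (V : Omega -> R)
  (pi : nat -> Omega -> 'I_K) :
  (forall i s, measurable_fun setT (X i s)) ->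
  measurable_fun setT V ->
  admissible V X pi ->
  forall t i, measurable (pi t @^-1` [set i]).
Proof.
move=> mX mV adm t; elim/ltn_ind: t => t IH i.
have levelM : forall s, (s < t)%N -> forall j n,
    measurable [set w | tau pi j s w = n].
  move=> s st j n.
  have := @tauM_gen R d Omega K pi j s (fun r rs => IH r (ltn_trans rs st))
    measurableT [set (n%:R : R)] (measurable_set1 _).
  rewrite setTI; congr measurable; apply/seteqP; split => w /=.
    by move/eqP; rewrite eqr_nat => /eqP.
  by move=> ->.
suff sub : past_gen V X pi t `<=` measurable.
  exact: (smallest_sub (@sigma_algebra_measurable d Omega) sub (adm t i)).
move=> A [[B [mB ->]] | [[s [st [B ->]]] | [s [st [B [mB ->]]]]]].
- by have := mV measurableT B mB; rewrite setTI.
- have -> : pi s @^-1` B = \bigcup_(j in B) pi s @^-1` [set j].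
    apply/seteqP; split => w /=.
      by move=> Bw; exists (pi s w).
    by move=> [j Bj /= ->].
  apply: fin_bigcup_measurable; first exact: finite_finset.
  by move=> j _; exact: IH.
- have -> : Xpi X pi s @^-1` B = \bigcup_(j in setT) \bigcup_n
     (pi s @^-1` [set j] `&` [set w | tau pi j s w = n] `&` (X j n @^-1` B)).
    apply/seteqP; split => w /=.
      move=> Bw; exists (pi s w) => //; exists (tau pi (pi s w) s w) => //.
    by move=> [j _ [n _ [[/= pj tn] xb]]]; rewrite /Xpi pj tn.
  apply: fin_bigcup_measurable; first exact: finite_finset.
  move=> j _; apply: bigcupT_measurable => n.
  apply: measurableI; first apply: measurableI.
  + exact: IH.
  + exact: levelM.
  + by have := mX j n measurableT B mB; rewrite setTI.
Qed.

Section Det.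
Variable R : realType.
Variables (Lsp : set (R -> R)) (N : (R -> R) -> R).
Hypothesis BS : banach_fun_space Lsp N.

Lemma L0 : Lsp (fun _ => 0).
Proof. by case: BS. Qed.

Lemma LD {f g} : Lsp f -> Lsp g -> Lsp (fun y => f y + g y).
Proof. by case: BS => _ H _ _ _; apply: H. Qed.

Lemma LZ c {f} : Lsp f -> Lsp (fun y => c * f y).
Proof. by case: BS => _ _ H _ _; apply: H. Qed.

Lemma Lsub {f g} : Lsp f -> Lsp g -> Lsp (fsub f g).
Proof.
move=> Lf Lg; have := LD Lf (LZ (-1) Lg).
congr Lsp; apply/funext => y; rewrite /fsub; ring.
Qed.

Lemma Nge0 {f} : Lsp f -> 0 <= N f.
Proof. by case: BS => _ _ _ _ [H _ _ _ _]; apply: H. Qed.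

Lemma NZ c {f} : Lsp f -> N (fun y => c * f y) = `|c| * N f.
Proof. by case: BS => _ _ _ _ [_ _ H _ _]; apply: H. Qed.

Lemma ND {f g} : Lsp f -> Lsp g -> N (fun y => f y + g y) <= N f + N g.
Proof. by case: BS => _ _ _ _ [_ _ _ H _]; apply: H. Qed.

Lemma N0 : N (fun _ => 0) = 0.
Proof.
by have := NZ 0 L0; rewrite normr0 !mul0r.

Qed.

Lemma Nsum (I : Type) (r : seq I) (c : I -> R) (f : I -> R -> R) :
  (forall i, Lsp (f i)) ->
  Lsp (fun y => \sum_(i <- r) c i * f i y) /\
  N (fun y => \sum_(i <- r) c i * f i y) <= \sum_(i <- r) `|c i| * N (f i).
Proof.
move=> Lf; elim: r => [|a r [IH1 IH2]].
  have -> : (fun y : R => \sum_(i <- [::]) c i * f i y) = (fun _ => 0).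
    by apply/funext => y; rewrite big_nil.
  by rewrite big_nil N0; split => //; exact: L0.
have -> : (fun y => \sum_(i <- a :: r) c i * f i y) =
   (fun y => (fun y => c a * f a y) y + (fun y => \sum_(i <- r) c i * f i y) y).
  by apply/funext => y; rewrite big_cons.
split; first exact: LD (LZ _ (Lf a)) IH1.
rewrite big_cons; apply: le_trans (ND (LZ _ (Lf a)) IH1) _.
by rewrite NZ // lerD2l.
Qed.

End Det.
Arguments L0 {R Lsp N} BS.
Arguments LD {R Lsp N} BS {f g}.
Arguments LZ {R Lsp N} BS c {f}.
Arguments Lsub {R Lsp N} BS {f g}.
Arguments Nge0 {R Lsp N} BS {f}.
Arguments NZ {R Lsp N} BS c {f}.
Arguments ND {R Lsp N} BS {f g}.
Arguments N0 {R Lsp N} BS.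
Arguments Nsum {R Lsp N} BS {I} r c f.

Lemma Fmix_ind (R : realType) (K : nat) (F : 'I_K -> R -> R) (j : 'I_K) :
  Fmix F (fun i => (i == j)%:R) = F j.
Proof.
apply/funext => y; rewrite /Fmix (bigD1 j) //= eqxx mul1r big1 ?addr0 //.
by move=> i /negbTE ->; rewrite mul0r.
Qed.

Lemma DDelta_ind (R : realType) (K : nat) (F : 'I_K -> R -> R) (j : 'I_K) :
  DDelta F (F j).
Proof.
exists (fun i => (i == j)%:R); rewrite Fmix_ind; split => //; split.
  by move=> i; rewrite ler0n.
by rewrite (bigD1 j) //= eqxx big1 ?addr0 // => i /negbTE ->.
Qed.

Lemma QC (R : realType) (K : nat) (F : 'I_K -> R -> R) (Lsp : set (R -> R))
  (U : (R -> R) -> R) (M : R) :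
  (forall G, DDelta F G -> Lsp G) -> quasiconvex Lsp U ->
  (forall i, U (F i) <= M) ->
  forall p, in_simplex p -> U (Fmix F p) <= M.
Proof.
move=> HL qc HM.
suff H : forall n p, in_simplex p -> (forall i : 'I_K, (n <= i)%N -> p i = 0) ->
  U (Fmix F p) <= M.
  by move=> p sp; apply: (H K) => // i; rewrite leqNgt ltn_ord.
elim => [|n IH] p sp sup; case: (sp) => p0 p1.
  have : \sum_(i < K) p i = 0 by rewrite big1 // => i _; apply: sup.
  by rewrite p1 => /eqP; rewrite oner_eq0.
case: (ltnP n K) => [nK|Kn]; last first.
  apply: IH => // i ni; have := ltn_ord i; rewrite ltnNge (leq_trans Kn ni) //.

set j := Ordinal nK.
have sj : p j + \sum_(i | i != j) p i = 1 by rewrite -p1 [in RHS](bigD1 j).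
have s0 : 0 <= \sum_(i | i != j) p i by apply: sumr_ge0.
have [pj1|pj1] := eqVneq (p j) 1.
  have z : forall i, i != j -> p i = 0.
    apply: psumr_eq0P => //; move: sj; rewrite pj1; lra.
  have -> : Fmix F p = F j.
    apply/funext => y; rewrite /Fmix (bigD1 j) //= pj1 mul1r big1 ?addr0 //.
    by move=> i /z ->; rewrite mul0r.
  exact: HM.
set lam := p j.
have lam0 : 0 <= lam by apply: p0.
have lam1 : lam < 1 by rewrite lt_neqAle pj1 /=; move: sj s0; rewrite -/lam; lra.
have l1 : 1 - lam != 0 by rewrite subr_eq0 eq_sym pj1.
pose p' := fun i => if i == j then 0 else p i / (1 - lam).
have sp' : in_simplex p'.
  split.
    move=> i; rewrite /p'; case: ifP => // _; apply: divr_ge0 => //; lra.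
  rewrite (bigD1 j) //= /p' eqxx add0r.
  rewrite (eq_bigr (fun i => p i / (1 - lam))); last by move=> i /negbTE ->.
  rewrite -mulr_suml; have -> : \sum_(i | i != j) p i = 1 - lam by move: sj; rewrite -/lam; lra.
  by rewrite divff.
have U' : U (Fmix F p') <= M.
  apply: IH => // i ni; rewrite /p'; case: ifP => // /eqP ij.
  rewrite sup ?mul0r //; rewrite ltn_neqAle ni andbT; apply/eqP => e.
  by apply: ij; apply: val_inj; rewrite /= e.
have -> : Fmix F p = fun y => lam * F j y + (1 - lam) * Fmix F p' y.
  apply/funext => y; rewrite /Fmix (bigD1 j) //= mulr_sumr [in RHS](bigD1 j) //=.
  rewrite /p' eqxx mul0r mulr0 add0r; congr (_ + _); apply: eq_bigr => i /negbTE ->.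
  by field.
have lm : 0 <= lam <= 1 by rewrite lam0 /=; lra.
move: qc; rewrite /quasiconvex => qc.
have := qc (F j) (Fmix F p') lam (HL _ (@DDelta_ind R K F j))
   (HL _ (ex_intro _ p' (conj sp' erefl))) lm.
move=> /le_trans; apply.
by rewrite ge_max HM U'.
Qed.

Lemma pointwise (R : realType) (K : nat) (F : 'I_K -> R -> R)
  (Lsp : set (R -> R)) (N : (R -> R) -> R) (U : (R -> R) -> R) (b q : R)
  (pstar : 'I_K -> R) (istar : 'I_K) (c : 'I_K -> R) :
  banach_fun_space Lsp N -> (forall G, DDelta F G -> Lsp G) ->
  quasiconvex Lsp U -> 0 < b -> 1 <= q ->
  (forall F' G, DDelta F F' -> DDelta F G ->
     `|U F' - U G| <= b * (N (fsub F' G) + N (fsub F' G) `^ q)) ->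
  in_simplex pstar ->
  (forall p, in_simplex p -> U (Fmix F p) <= U (Fmix F pstar)) ->
  (forall i, U (Fmix F pstar) - U (F istar) <= U (Fmix F pstar) - U (F i)) ->
  in_simplex c ->
  0 <= U (Fmix F pstar) - U (Fmix F c) <=
  b * (1 + \big[Num.max/0]_(i < K) \big[Num.max/0]_(j < K)
                        (N (fsub (F i) (F j)) `^ (q - 1))) *
  \sum_(i < K | i != istar) c i * N (fsub (F istar) (F i)).
Proof.
move=> BS HL qc b0 q1 SS sps maxp mini sc.
have UiM : forall i, U (F i) <= U (F istar).
  by move=> i; have := mini i; lra.
have Up : U (Fmix F pstar) <= U (F istar) := @QC R K F Lsp U _ HL qc UiM pstar sps.
have Uc : U (Fmix F c) <= U (Fmix F pstar) by apply: maxp.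
apply/andP; split; first lra.
set n := fun i => N (fsub (F istar) (F i)).
set Mx := \big[Num.max/0]_(i < K) _.
have Lf : forall i, Lsp (fsub (F istar) (F i)).
  by move=> i; apply: (Lsub BS); apply: HL; apply: DDelta_ind.
have Dc : DDelta F (Fmix F c) by exists c.
case: (sc) => c0 c1.
have eqf : fsub (F istar) (Fmix F c) =
   fun y => \sum_(i <- index_enum 'I_K) c i * fsub (F istar) (F i) y.
  apply/funext => y; rewrite /fsub /Fmix.
  under [RHS]eq_bigr do rewrite mulrBr.
  by rewrite sumrB -mulr_suml c1 mul1r.
have [_ HD] := Nsum BS (index_enum (ordinal K)) c _ Lf.
set D := N (fsub (F istar) (Fmix F c)).
have D0 : 0 <= D by apply: (Nge0 BS); apply: (Lsub BS); apply: HL => //; exact: DDelta_ind.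
have HD' : D <= \sum_i c i * n i.
  rewrite /D eqf; apply: le_trans HD _.
  by apply: ler_sum => i _; rewrite ger0_norm.
have nst : n istar = 0.
  rewrite /n; have -> : fsub (F istar) (F istar) = fun _ => 0.
    by apply/funext => y; rewrite /fsub subrr.
  exact: (N0 BS).
have HS : \sum_i c i * n i = \sum_(i | i != istar) c i * n i.
  by rewrite (bigD1 istar) //= nst mulr0 add0r.
have [j0 _ Hj0] : extremum_spec >=%O xpredT n [arg max_(i > istar) n i]%O.
  exact: arg_maxP.
have Dj0 : D <= n j0.
  apply: le_trans HD' _.
  apply: le_trans (_ : \sum_i c i * n j0 <= _); last by rewrite -mulr_suml c1 mul1r.
  by apply: ler_sum => i _; apply: ler_wpM2l => //; apply: Hj0.
have nj0 : 0 <= n j0 by apply: (Nge0 BS).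
have Dq : D `^ (q - 1) <= Mx.
  apply: le_trans (_ : n j0 `^ (q - 1) <= _).
    by apply: (ge0_ler_powR _) => //; rewrite ?nnegrE //; lra.
  apply: le_trans (le_bigmax 0 (fun j => N (fsub (F istar) (F j)) `^ (q - 1)) j0) _.
  exact: (le_bigmax 0 (fun i => \big[Num.max/0]_(j < K) N (fsub (F i) (F j)) `^ (q - 1)) istar).
have Dpow : D `^ q = D * D `^ (q - 1).
  have -> : D `^ q = D `^ (1 + (q - 1)) by congr (_ `^ _); ring.
  rewrite (@powRD R D 1 (q - 1)) ?powRr1 //.
  have -> : (1 + (q - 1) == 0) = false by apply/negbTE; rewrite addrC subrK; apply/eqP; lra.
  by [].
have stab := SS (F istar) (Fmix F c) (@DDelta_ind R K F istar) Dc.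
rewrite -/D Dpow in stab.
have e1 : U (Fmix F pstar) - U (Fmix F c) <= `|U (F istar) - U (Fmix F c)|.
  apply: le_trans (ler_norm _); lra.
apply: le_trans e1 _; apply: le_trans stab _.
rewrite -HS.
set S := \sum_i c i * n i.
have DS : D * D `^ (q - 1) <= S * Mx.
  by apply: ler_pM; [exact: D0 | exact: powR_ge0 | exact: HD' | exact: Dq].
have : D + D * D `^ (q - 1) <= S + S * Mx by apply: lerD.
move=> /(ler_wpM2l (ltW b0)) => h; apply: le_trans h _.
by rewrite le_eqVlt; apply/orP; left; apply/eqP; ring.
Qed.

Lemma int_mono (R : realType) (d : measure_display) (Omega : measurableType d)
  (mu : {measure set Omega -> \bar R}) (f g : Omega -> \bar R) :
  (forall x, (0 <= f x)%E) -> (forall x, (f x <= g x)%E) ->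
  (\int[mu]_x f x <= \int[mu]_x g x)%E.
Proof.
move=> f0 fg; rewrite !ge0_integralTE //; last by move=> x; apply: le_trans (f0 x) (fg x).
apply: ereal_sup_le => _ [h hf <-]; exists h => //= x.
exact: le_trans (hf x) (fg x).
Qed.

Theorem lemma6 (R : realType) (d : measure_display) (Omega : measurableType d)
    (P : probability Omega R) (K : nat)
    (X : 'I_K -> nat -> Omega -> R) (V : Omega -> R) (F : 'I_K -> R -> R)
    (Lsp : set (R -> R)) (N : (R -> R) -> R) (U : (R -> R) -> R)
    (a b q : R) (pstar : 'I_K -> R) (istar : 'I_K)
    (pi : nat -> Omega -> 'I_K) (T : nat) :
  (0 < K)%N ->
  (forall i s, measurable_fun setT (X i s)) ->
  measurable_fun setT V ->
  (forall i s y, P [set w | X i s w <= y] = (F i y)%:E) ->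
  mutually_independent P (VX_family V X) ->
  banach_fun_space Lsp N ->
  (forall G, DDelta F G \/ Dhat G -> Lsp G) ->
  quasiconvex Lsp U ->
  strongly_stable P X F N U a b q ->
  in_simplex pstar ->
  (forall p, in_simplex p -> U (Fmix F p) <= U (Fmix F pstar)) ->
  (forall i, U (Fmix F pstar) - U (F istar) <= U (Fmix F pstar) - U (F i)) ->
  admissible V X pi ->
  (1 <= T)%N ->
  let Lc := b * (1 + \big[Num.max/0]_(i < K) \big[Num.max/0]_(j < K)
                        (N (fsub (F i) (F j)) `^ (q - 1))) in
  (\int[P]_w (U (Fmix F pstar) - U (Ftilde F pi T w))%:E
    <= (Lc / T%:R)%:E *
       \sum_(i < K | i != istar)
          (\int[P]_w ((tau pi i T w)%:R : R)%:E) * (N (fsub (F istar) (F i)))%:E)%E.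
Proof.
move=> K0 mX mV distr indep BS HL' qc [b0 q1 a0 SS _] sps maxp mini adm T1.
cbv zeta.
set Lc := b * (1 + _).
have HL : forall G, DDelta F G -> Lsp G by move=> G h; apply: HL'; left.
have SS' : forall F' G, DDelta F F' -> DDelta F G ->
     `|U F' - U G| <= b * (N (fsub F' G) + N (fsub F' G) `^ q).
  by move=> F' G h1 h2; apply: SS => //; left.
have piM' := @piM R d Omega K X V pi mX mV adm.
have tauM : forall i, measurable_fun setT (fun w => (tau pi i T w)%:R : R).
  by move=> i; apply: (@tauM_gen R d Omega K pi i T) => r _; apply: piM'.
set n := fun i => N (fsub (F istar) (F i)).
have n0 : forall i, 0 <= n i.
  move=> i; apply: (Nge0 BS); apply: (Lsub BS); apply: HL; exact: (@DDelta_ind R K F).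
have T0 : 0 < T%:R :> R by rewrite ltr0n.
have Mx0 : 0 <= \big[Num.max/0]_(i < K) \big[Num.max/0]_(j < K)
                        (N (fsub (F i) (F j)) `^ (q - 1)).
  by elim/big_rec: _ => // i x _ hx; rewrite le_max hx orbT.
have Lc0 : 0 <= Lc by rewrite /Lc mulr_ge0 //; [exact: ltW | lra].
have sumtau : forall w, \sum_(i < K) tau pi i T w = T.
  move=> w; rewrite /tau exchange_big /=.
  rewrite -[RHS]card_ord -sum1_card; apply: eq_bigr => s _.
  by rewrite (bigD1 (pi s w)) //= eqxx big1 ?addn0 // => i /negbTE; rewrite eq_sym => ->.
have simp : forall w, in_simplex (fun i => (tau pi i T w)%:R / T%:R : R).
  move=> w; split; first by move=> i; apply: divr_ge0; rewrite ler0n.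
  by rewrite -mulr_suml -natr_sum sumtau divff // gt_eqF.
have pw : forall w, 0 <= U (Fmix F pstar) - U (Ftilde F pi T w) <=
    Lc / T%:R * \sum_(i < K | i != istar) (tau pi i T w)%:R * n i.
  move=> w; have := @pointwise R K F Lsp N U b q pstar istar _ BS HL qc b0 q1 SS' sps maxp mini (simp w).
  rewrite /Ftilde -/Lc => /andP[-> h] /=; apply: le_trans h _.
  rewrite !mulr_sumr le_eqVlt; apply/orP; left; apply/eqP; apply: eq_bigr => i _.
  rewrite /n /=; ring.
apply: le_trans (@int_mono R d Omega P _
   (fun w => (Lc / T%:R * \sum_(i < K | i != istar) (tau pi i T w)%:R * n i)%:E) _ _) _.
- by move=> w; rewrite lee_fin; case/andP: (pw w).
- by move=> w; rewrite lee_fin; case/andP: (pw w).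
set k := Lc / T%:R.
have k0 : 0 <= k by apply: divr_ge0 => //; exact: ltW.
have E1 : forall w, (k * \sum_(i < K | i != istar) (tau pi i T w)%:R * n i)%:E =
   (\sum_(i <- [seq i <- index_enum 'I_K | i != istar])
      ((tau pi i T w)%:R * (k * n i))%:E)%E.
  move=> w; rewrite sumEFin big_filter mulr_sumr; congr (_%:E); apply: eq_bigr => i _.
  by rewrite mulrCA.
under eq_integral => w _ do rewrite E1.
rewrite ge0_integral_sum //; first last.
- by move=> i w _; rewrite lee_fin; apply: mulr_ge0 => //; apply: mulr_ge0.
- move=> i; apply/measurable_EFinP; apply: measurable_funM => //; exact: measurable_cst.
have E2 : forall i, (\int[P]_w ((tau pi i T w)%:R * (k * n i))%:E =
    (\int[P]_w ((tau pi i T w)%:R : R)%:E) * (k * n i)%:E)%E.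
  move=> i; under eq_integral do rewrite EFinM.
  apply: ge0_integralZr => //.
  by apply/measurable_EFinP; apply: tauM.
  by rewrite lee_fin (mulr_ge0 k0 (n0 i)).
rewrite (eq_bigr _ (fun i _ => E2 i)) big_filter.
rewrite ge0_sume_distrr; last first.
  by move=> i _; apply: mule_ge0; [apply: integral_ge0 => w _; rewrite lee_fin ler0n | rewrite lee_fin; exact: (n0 i)].
rewrite le_eqVlt; apply/orP; left; apply/eqP; apply: eq_bigr => i _.
by rewrite EFinM muleCA.
Qed.
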